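(* Let $Q$ and $W$ satisfy the standing assumptions with $W=Y$, let $l\ge1$, and assume $Q$ is future unique w.r.t. $I^l_l$. Let $\mathcal R=\{(\zeta,V)\in\hat X^{I^l_l}\times\hat X^{l\triangledown}:V=\{\zeta\}\}$, $\mathcal R^l=\{(x,\hat x)\in X\times\hat X^{I^l_l}:\hat x\in E^{I^l_l}(x)\}$ and $\mathcal R^{l\triangledown}=\{(x,\hat x)\in X\times\hat X^{l\triangledown}:\hat x=E^{I^l_l}(x)\}$. Then: (i) $\mathcal B(\hat Q^{l\triangledown})=\hat{\mathcal B}^l$; (ii) $\mathcal R$ is a simulation relation from $\hat Q^{I^l_l}$ to $\hat Q^{l\triangledown}$ w.r.t. $Y$ and $\mathcal R^{-1}$ is a simulation relation from $\hat Q^{l\triangledown}$ to $\hat Q^{I^l_l}$ w.r.t. $Y$; (iii) $(\mathcal R^l)^{-1}$ is a simulation relation from $\hat Q^{I^l_l}$ to $Q$ w.r.t. $Y$ if and only if $(\mathcal R^{l\triangledown})^{-1}$ is a simulation relation from $\hat Q^{l\triangledown}$ to $Q$ w.r.t. $Y$; (iv) $Q$ is state-based asynchronously $l$-complete w.r.t. $I^l_l$ if and only if $\Phi^{l+1}=\Phi^l$.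
   Context: Strings and signals: $\diamond$ is a symbol not in any other set considered. For a set $A$ and $l\in\mathbb N_0$, $A^l$ is the set of strings of length $l$ over $A$, indexed $\zeta=\zeta(0)\cdots\zeta(l-1)$; $\lambda$ is the empty string and $\cdot$ denotes concatenation. For a map $w$ on $\mathbb Z$ (or a string) and integers $t_1\le t_2$, $w|_{[t_1,t_2]}=w(t_1)\cdots w(t_2)$ is the string of length $t_2-t_1+1$ (absolute time forgotten); if $t_2<t_1$ it is $\lambda$. For a set $\mathcal S$ of such maps or strings, $\mathcal S|_{[t_1,t_2]}=\{s|_{[t_1,t_2]}:s\in\mathcal S\}$. State machines: a state machine is $Q=(X,U,Y,\delta,X_0)$ with $X_0\subseteq X$, $\delta\subseteq X\times U\times Y\times X$. Let $H_\delta(x)=\{y:\exists u,x'.\,(x,u,y,x')\in\delta\}$, $F_\delta(x,u)=\{x':\exists y\in H_\delta(x).\,(x,u,y,x')\in\delta\}$, $T_\delta(x)=\bigcup_{u\in U}F_\delta(x,u)$. The full behavior $\mathcal B_f(Q)$ is the set of $(\mu,\nu,\xi)\in(U\times Y\times X)^{\mathbb N_0}$ with $\xi(0)\in X_0$ and $(\xi(k),\mu(k),\nu(k),\xi(k+1))\in\delta$ for all $k\in\mathbb N_0$. $Q$ is live and reachable if every $x\in X_0$ is $\xi(0)$ for some $(\mu,\nu,\xi)\in\mathcal B_f(Q)$ and every $x\in X$ is $\xi(k)$ for some such trajectory and some $k$. Standing assumptions: $Q=(X,U,Y,\delta,X_0)$ is live and reachable and satisfies $(x,u,y,x')\in\delta\iff(x'\in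 F_\delta(x,u)\wedge y\in H_\delta(x))$ for all $x,x'\in X,u\in U,y\in Y$; the external signal space $W$ is finite and either $W=U\times Y$ or $W=Y$ (here $W=Y$, with $\pi_W(u,y)=\pi_Y(u,y)=y$). Behaviors: for a state machine $Q'$ with input set $U$ and output set $Y$, $\mathcal B(Q')$ is the set of $w:\mathbb Z\to Y\cup\{\diamond\}$ such that for some $(\mu,\nu,\xi)\in\mathcal B_f(Q')$, $w(k)=\diamond$ for $k<0$ and $w(k)=\nu(k)$ for $k\ge0$. $\mathcal B_S(Q)$ is the set of pairs $(w,\xi)$ of maps on $\mathbb Z$ with $w(k)=\xi(k)=\diamond$ for $k<0$ and $(w(k),\xi(k))=(\nu(k),\xi'(k))$ for $k\ge0$, for some $(\mu,\nu,\xi')\in\mathcal B_f(Q)$. For a set $\mathcal B$ of maps on $\mathbb Z$, $\Pi_l(\mathcal B)=\bigcup_{k\in\mathbb N_0}\mathcal B|_{[k-l+1,k]}$. SAlCA: for $l\in\mathbb N_0$, $\hat{\mathcal B}^l$ is the set of $w:\mathbb Z\to W\cup\{\diamond\}$ with $w(k)=\diamond$ for $k<0$, $w(k)\in W$ for $k\ge0$, $w|_{[-l,0]}\in\mathcal B(Q)|_{[-l,0]}$ and $w|_{[k-l,k]}\in\Pi_{l+1}(\mathcal B(Q))$ for all $k\in\mathbb N_0$. Corresponding strings: for integers $a,b$ and $x\in X$, $E^{[a,b]}(x)=\{\zeta:\exists(w,\xi)\in\mathcal B_S(Q),k\in\mathbb N_0:\ \xi(k)=x,\ \zeta=w|_{[k+a,k+b]}\}$.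 For $l,m\in\mathbb N_0$ with $m\le l$, $I^l_m=[m-l,m-1]$; in particular $I^l_l=[0,l-1]$. Future uniqueness: $Q$ is future unique w.r.t. $I^l_m$ if for all $x\in X$ and $\zeta,\zeta'\in E^{I^l_m}(x)$, $\zeta|_{[l-m,l-1]}=\zeta'|_{[l-m,l-1]}$. State-based asynchronous $l$-completeness: $Q$ is state-based asynchronously $l$-complete w.r.t. $I^l_m$ if for all $x\in X$ and $\zeta\in\Pi_{l+1}(\mathcal B(Q))$, $\zeta|_{[0,l-1]}\in E^{I^l_m}(x)$ implies $\zeta\in E^{[m-l,m]}(x)$. Abstract state machine: $\hat Q^{I^l_m}=(\hat X^{I^l_m},U,Y,\hat\delta^{I^l_m},\hat X^{I^l_m}_0)$ with $\hat X^{I^l_m}=\bigcup_{x\in X}E^{I^l_m}(x)$, $\hat X^{I^l_m}_0=\bigcup_{x\in X_0}E^{I^l_m}(x)$, and $(\hat x,u,y,\hat x')\in\hat\delta^{I^l_m}$ iff (1) $\hat x'|_{[0,l-m-1]}=(\hat x|_{[0,l-m-1]}\cdot\pi_W(u,y))|_{[1,l-m]}$, (2) $\hat x|_{[l-m,l-1]}=(\pi_W(u,y)\cdot\hat x'|_{[l-m,l-2]})|_{[0,m-1]}$, and (3) there are $x,x'\in X$ with $\hat x\in E^{I^l_m}(x)$, $\hat x'\in E^{I^l_m}(x')$, $(x,u,y,x')\in\delta$. Quotient state machine (for $W=Y$): $\hat Q^{l\triangledown}=(\hat X^{l\triangledown},U,Y,\hat\delta^{l\triangledown},\hat X^{l\triangledown}_0)$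 with $\hat X^{l\triangledown}=\{E^{I^l_l}(x):x\in X\}$ (a set of subsets of $Y^l$), $\hat X^{l\triangledown}_0=\{E^{I^l_l}(x):x\in X_0\}$, and $(\hat x,u,y,\hat x')\in\hat\delta^{l\triangledown}$ iff there exist $x,x'\in X$ with $\hat x=E^{I^l_l}(x)$, $\hat x'=E^{I^l_l}(x')$ and $(x,u,y,x')\in\delta$. Partitions: for $\Xi\subseteq X$ let $T_\delta^{-1}(\Xi)=\{x\in X:T_\delta(x)\cap\Xi\neq\emptyset\}$ and for $V\subseteq Y$ let $H_\delta^{-1}(V)=\{x\in X:H_\delta(x)=V\}$. Set $\Phi^1=\{H_\delta^{-1}(V):V\subseteq Y\}\setminus\{\emptyset\}$ and, for $l\ge2$, let $\Phi^l$ be the partition of $X$ whose cells are the nonempty sets of the form $\Xi\cap\bigcap_{\Xi'\in\Phi^{l-1}}A_{\Xi'}$ with $\Xi\in\Phi^{l-1}$ and each $A_{\Xi'}\in\{T_\delta^{-1}(\Xi'),\,X\setminus T_\delta^{-1}(\Xi')\}$. Simulation relations: for state machines $Q_i=(X_i,U,Y,\delta_i,X_{0,i})$, $i=1,2$, and $V\in\{U\times Y,Y\}$, a relation $\mathcal R\subseteq X_1\times X_2$ is a simulation relation from $Q_1$ to $Q_2$ w.r.t. $V$ if (a) for every $x_1\in X_{0,1}$ there is $x_2\in X_{0,2}$ with $(x_1,x_2)\in\mathcal R$, and (b) for all $(x_1,x_2)\in\mathcal R$ and $(x_1,u_1,y_1,x_1')\in\delta_1$ there exist $u_2,y_2,x_2'$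 with $(x_2,u_2,y_2,x_2')\in\delta_2$, $(x_1',x_2')\in\mathcal R$ and $\pi_V(u_1,y_1)=\pi_V(u_2,y_2)$. $\mathcal R^{-1}=\{(x_2,x_1):(x_1,x_2)\in\mathcal R\}$. *)

(* Defs.v *)
(* State machines with arbitrary state/input types, finite output type Y.
   External signal space W = Y (pi_W(u,y) = y). Diamond is encoded as [None]. *)
From Stdlib Require Import ZArith List.
Open Scope Z_scope.
Set Implicit Arguments.

(* s|_[t1,t2] for a string s (indices from 0); empty if t2 < t1 *)
Definition strR {A : Type} (s : list A) (t1 t2 : Z) : list A :=
  firstn (Z.to_nat (t2 - t1 + 1)) (skipn (Z.to_nat t1) s).

(* w|_[t1,t2] for a map w on Z; empty if t2 < t1 *)
Definition sigR {A : Type} (w : Z -> A) (t1 t2 : Z) : list A :=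
  map (fun i => w (t1 + Z.of_nat i)) (List.seq 0 (Z.to_nat (t2 - t1 + 1))).

Record machine (S U Y : Type) := Machine {
  mstate : S -> Prop;
  minit  : S -> Prop;
  mtrans : S -> U -> Y -> S -> Prop
}.
Arguments Machine {S U Y}.
Arguments mstate {S U Y}.
Arguments minit {S U Y}.
Arguments mtrans {S U Y}.

Definition full_beh {S U Y : Type} (M : machine S U Y)
  (mu : nat -> U) (nu : nat -> Y) (xi : nat -> S) : Prop :=
  minit M (xi O) /\ forall k : nat, mtrans M (xi k) (mu k) (nu k) (xi (Datatypes.S k)).

Definition live_reach {S U Y : Type} (M : machine S U Y) : Prop :=
  (forall x, minit M x -> exists mu nu xi, full_beh M mu nu xi /\ xi O = x) /\
  (forall x, mstate M x -> exists mu nu xi (k : nat), full_beh M mu nu xi /\ xi k = x).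

Definition beh {S U Y : Type} (M : machine S U Y) (w : Z -> option Y) : Prop :=
  exists mu nu xi, full_beh M mu nu xi /\
    (forall k, k < 0 -> w k = None) /\
    (forall k, 0 <= k -> w k = Some (nu (Z.to_nat k))).

Definition Pi {Y : Type} (l : Z) (B : (Z -> option Y) -> Prop) (s : list (option Y)) : Prop :=
  exists w, B w /\ exists k : nat, s = sigR w (Z.of_nat k - l + 1) (Z.of_nat k).

Section Q.
Context {X U Y : Type} (delta : X -> U -> Y -> X -> Prop) (X0 : X -> Prop).

Definition QM : machine X U Y := Machine (fun _ => True) X0 delta.

Definition Hd (x : X) (y : Y) : Prop := exists u x', delta x u y x'.
Definition Fd (x : X) (u : U) (x' : X) : Prop := exists y, Hd x y /\ delta x u y x'.
Definition Td (x x' : X) : Prop := exists u, Fd x u x'.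

Definition standing : Prop :=
  live_reach QM /\
  (forall x u y x', delta x u y x' <-> (Fd x u x' /\ Hd x y)) /\
  (exists ys : list Y, forall y, In y ys).

Definition BS (w : Z -> option Y) (xi : Z -> option X) : Prop :=
  exists mu nu xi', full_beh QM mu nu xi' /\
    (forall k, k < 0 -> w k = None /\ xi k = None) /\
    (forall k, 0 <= k -> w k = Some (nu (Z.to_nat k)) /\ xi k = Some (xi' (Z.to_nat k))).

Definition E (a b : Z) (x : X) (s : list (option Y)) : Prop :=
  exists w xi, BS w xi /\ exists k : nat,
    xi (Z.of_nat k) = Some x /\ s = sigR w (Z.of_nat k + a) (Z.of_nat k + b).

(* E^{I^l_m}(x), with I^l_m = [m-l, m-1] *)
Definition EI (l m : nat) (x : X) : list (option Y) -> Prop :=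
  E (Z.of_nat m - Z.of_nat l) (Z.of_nat m - 1) x.

Definition future_unique (l m : nat) : Prop :=
  forall x s s', EI l m x s -> EI l m x s' ->
    strR s (Z.of_nat l - Z.of_nat m) (Z.of_nat l - 1) =
    strR s' (Z.of_nat l - Z.of_nat m) (Z.of_nat l - 1).

Definition sb_async_complete (l m : nat) : Prop :=
  forall x s, Pi (Z.of_nat l + 1) (beh QM) s ->
    EI l m x (strR s 0 (Z.of_nat l - 1)) ->
    E (Z.of_nat m - Z.of_nat l) (Z.of_nat m) x s.

Definition SAlCA (l : nat) (w : Z -> option Y) : Prop :=
  (forall k, k < 0 -> w k = None) /\
  (forall k, 0 <= k -> exists y, w k = Some y) /\
  (exists w', beh QM w' /\ sigR w (- Z.of_nat l) 0 = sigR w' (- Z.of_nat l) 0) /\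
  (forall k : nat, Pi (Z.of_nat l + 1) (beh QM)
                      (sigR w (Z.of_nat k - Z.of_nat l) (Z.of_nat k))).

Definition hstate (l m : nat) (s : list (option Y)) : Prop := exists x, EI l m x s.
Definition hinit (l m : nat) (s : list (option Y)) : Prop := exists x, X0 x /\ EI l m x s.
Definition htrans (l m : nat) (s : list (option Y)) (u : U) (y : Y) (s' : list (option Y)) : Prop :=
  let L := Z.of_nat l in let M := Z.of_nat m in
  strR s' 0 (L - M - 1) = strR (strR s 0 (L - M - 1) ++ Some y :: nil) 1 (L - M) /\
  strR s (L - M) (L - 1) = strR (Some y :: strR s' (L - M) (L - 2)) 0 (M - 1) /\
  exists x x', EI l m x s /\ EI l m x' s' /\ delta x u y x'.
Definition hatQ (l m : nat) : machine (list (option Y)) U Y :=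
  Machine (hstate l m) (hinit l m) (htrans l m).

Definition qstate (l : nat) (V : list (option Y) -> Prop) : Prop := exists x, V = EI l l x.
Definition qinit (l : nat) (V : list (option Y) -> Prop) : Prop := exists x, X0 x /\ V = EI l l x.
Definition qtrans (l : nat) (V : list (option Y) -> Prop) (u : U) (y : Y)
  (V' : list (option Y) -> Prop) : Prop :=
  exists x x', V = EI l l x /\ V' = EI l l x' /\ delta x u y x'.
Definition quotQ (l : nat) : machine (list (option Y) -> Prop) U Y :=
  Machine (qstate l) (qinit l) (qtrans l).

Definition Rrel (l : nat) (s : list (option Y)) (V : list (option Y) -> Prop) : Prop :=
  hstate l l s /\ qstate l V /\ V = (fun s' => s' = s).
Definition Rl (l : nat) (x : X) (s : list (option Y)) : Prop :=
  hstate l l s /\ EI l l x s.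
Definition Rq (l : nat) (x : X) (V : list (option Y) -> Prop) : Prop :=
  qstate l V /\ V = EI l l x.

(* partitions Phi^l; sets of states are predicates, families are taken up to
   extensional equality of their members *)
Definition Tinv (Xi : X -> Prop) (x : X) : Prop := exists x', Td x x' /\ Xi x'.

(* PhiS n = Phi^(n+1) *)
Fixpoint PhiS (n : nat) : (X -> Prop) -> Prop :=
  match n with
  | O => fun Xi => (exists x, Xi x) /\
           exists V : Y -> Prop, forall x, Xi x <-> (forall y, Hd x y <-> V y)
  | Datatypes.S n' => fun Xi => (exists x, Xi x) /\
           exists Xi0, PhiS n' Xi0 /\
           exists c : (X -> Prop) -> bool, forall x,
             Xi x <-> (Xi0 x /\ forall Xi', PhiS n' Xi' ->
                                  if c Xi' then Tinv Xi' x else ~ Tinv Xi' x)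
  end.

Definition Phi (l : nat) : (X -> Prop) -> Prop := PhiS (Nat.pred l).


End Q.

Definition sim {S1 S2 U Y : Type} (M1 : machine S1 U Y) (M2 : machine S2 U Y)
  (R : S1 -> S2 -> Prop) : Prop :=
  (forall x1, minit M1 x1 -> exists x2, minit M2 x2 /\ R x1 x2) /\
  (forall x1 x2, R x1 x2 -> forall u1 y1 x1', mtrans M1 x1 u1 y1 x1' ->
     exists u2 y2 x2', mtrans M2 x2 u2 y2 x2' /\ R x1' x2' /\ y1 = y2).

(* Main.v *)
Require Import Defs.
From Stdlib Require Import ZArith List Lia Arith.
From Stdlib Require Import Classical ClassicalEpsilon FunctionalExtensionality PropExtensionality.

Definition mk {A : Type} (f : nat -> A) (n : nat) : list A := map f (seq 0 n).

Lemma mk_length {A} (f : nat -> A) n : length (mk f n) = n.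
Proof. unfold mk. rewrite length_map, length_seq. reflexivity. Qed.

Lemma mk_nth {A} (f : nat -> A) n i d : (i < n)%nat -> nth i (mk f n) d = f i.
Proof. intro H. unfold mk. rewrite nth_indep with (d' := f 0%nat) by (rewrite length_map, length_seq; lia).
  rewrite map_nth, seq_nth by lia. reflexivity. Qed.

Lemma mk_ext {A} (f g : nat -> A) n : (forall i, (i < n)%nat -> f i = g i) -> mk f n = mk g n.
Proof. intro H. unfold mk. apply map_ext_in. intros a Ha. apply in_seq in Ha. apply H. lia. Qed.

Lemma mk_S {A} (f : nat -> A) n : mk f (S n) = f 0%nat :: mk (fun i => f (S i)) n.
Proof. unfold mk. simpl. f_equal. rewrite <- seq_shift, map_map. reflexivity. Qed.

Lemma list_eq_nth {A} (s t : list A) d : length s = length t ->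
  (forall i, (i < length s)%nat -> nth i s d = nth i t d) -> s = t.
Proof. intros. apply nth_ext with d d; auto. Qed.

Lemma mk_inj {A} (f g : nat -> A) n : mk f n = mk g n -> forall i, (i < n)%nat -> f i = g i.
Proof. intros H i Hi. rewrite <- (mk_nth f n i (f 0%nat)) by auto.
  rewrite <- (mk_nth g n i (f 0%nat)) by auto. rewrite H. reflexivity. Qed.

Lemma firstn_mk {A} (f : nat -> A) k n : (k <= n)%nat -> firstn k (mk f n) = mk f k.
Proof. intro H. apply list_eq_nth with (d := f 0%nat).
  - rewrite length_firstn, !mk_length. lia.
  - intros i Hi. rewrite length_firstn, mk_length in Hi. rewrite nth_firstn.
    destruct (Nat.ltb_spec i k); [|lia]. rewrite !mk_nth by lia. reflexivity. Qed.

Lemma sigR_mk {A} (w : Z -> A) a b : sigR w a b = mk (fun i => w (a + Z.of_nat i)%Z) (Z.to_nat (b - a + 1)).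
Proof. reflexivity. Qed.

Lemma strR0 {A} (s : list A) b : strR s 0 b = firstn (Z.to_nat (b + 1)) s.
Proof. unfold strR. simpl. f_equal. f_equal. lia. Qed.

Lemma sigR_eq {A} (w w' : Z -> A) a b a' b' : (b - a = b' - a')%Z ->
  (forall i, (i < Z.to_nat (b - a + 1))%nat -> w (a + Z.of_nat i)%Z = w' (a' + Z.of_nat i)%Z) ->
  sigR w a b = sigR w' a' b'.
Proof. intros E H. rewrite !sigR_mk. rewrite <- E. apply mk_ext. auto. Qed.

Lemma sigR_pt {A} (w w' : Z -> A) a b a' b' : (b - a = b' - a')%Z -> sigR w a b = sigR w' a' b' ->
  forall i, (i < Z.to_nat (b - a + 1))%nat -> w (a + Z.of_nat i)%Z = w' (a' + Z.of_nat i)%Z.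
Proof. intros E H. rewrite !sigR_mk in H. rewrite <- E in H. apply (mk_inj _ _ _ H). Qed.

Open Scope Z_scope.
Section M.
Context {X U Y : Type} (delta : X -> U -> Y -> X -> Prop) (X0 : X -> Prop).

Definition run (x : X) (mu : nat -> U) (nu : nat -> Y) (xi : nat -> X) : Prop :=
  xi O = x /\ forall k, delta (xi k) (mu k) (nu k) (xi (S k)).

Lemma fb_shift mu nu xi t : full_beh (QM delta X0) mu nu xi ->
  run (xi t) (fun i => mu (t + i)%nat) (fun i => nu (t + i)%nat) (fun i => xi (t + i)%nat).
Proof. intros [_ H]. split. f_equal; lia. intro k. rewrite Nat.add_succ_r. apply H. Qed.

Lemma run_shift x mu nu xi : run x mu nu xi ->
  delta x (mu O) (nu O) (xi 1%nat) /\
  run (xi 1%nat) (fun i => mu (S i)) (fun i => nu (S i)) (fun i => xi (S i)).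
Proof. intros [H0 H]. split. rewrite <- H0. apply H. split; auto. Qed.

Definition consf {A} (a : A) (f : nat -> A) : nat -> A :=
  fun i => match i with O => a | S j => f j end.

Lemma run_cons x u y x' mu nu xi : delta x u y x' -> run x' mu nu xi ->
  run x (consf u mu) (consf y nu) (consf x xi).
Proof. intros Hd [H0 H]. split. reflexivity. intros [|k]; simpl. rewrite H0; auto. apply H. Qed.

Lemma run_exists : live_reach (QM delta X0) -> forall x, exists mu nu xi, run x mu nu xi.
Proof. intros [_ H] x. destruct (H x I) as (mu & nu & xi & k & Hb & Hk).
  subst. eexists; eexists; eexists. apply fb_shift; eauto. Qed.

Lemma splice : live_reach (QM delta X0) -> forall x mu nu xi, run x mu nu xi ->
  exists mu' nu' xi' (t : nat), full_beh (QM delta X0) mu' nu' xi' /\ xi' t = x /\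
    forall i, nu' (t + i)%nat = nu i.
Proof. intros [_ H] x mu nu xi [Hr0 Hr]. destruct (H x I) as (mu0 & nu0 & xi0 & k & [Hi Hb] & Hk).
  exists (fun i => if (i <? k)%nat then mu0 i else mu (i - k)%nat),
         (fun i => if (i <? k)%nat then nu0 i else nu (i - k)%nat),
         (fun i => if (i <? k)%nat then xi0 i else xi (i - k)%nat), k.
  split; [split|split].
  - simpl. destruct (Nat.ltb_spec 0 k). auto. assert (k = O) by lia. subst k. simpl. rewrite Hr0, <- Hk. auto.
  - intro i. destruct (Nat.ltb_spec i k); destruct (Nat.ltb_spec (S i) k).
    + apply Hb.
    + assert (Ek : k = S i) by lia. replace (S i - k)%nat with O by lia. rewrite Hr0, <- Hk, Ek. apply Hb.
    + lia.
    + replace (S i - k)%nat with (S (i - k)) by lia. apply Hr.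
  - destruct (Nat.ltb_spec k k). lia. rewrite Nat.sub_diag. auto.
  - intro i. destruct (Nat.ltb_spec (k + i) k). lia. f_equal. lia.
Qed.

Definition bw (nu : nat -> Y) : Z -> option Y := fun t => if t <? 0 then None else Some (nu (Z.to_nat t)).

Lemma beh_bw mu nu xi : full_beh (QM delta X0) mu nu xi -> beh (QM delta X0) (bw nu).
Proof. intro H. exists mu, nu, xi. split; auto. unfold bw. split; intros k Hk.
  destruct (Z.ltb_spec k 0); auto; lia. destruct (Z.ltb_spec k 0); auto; lia. Qed.

Lemma E0_run : live_reach (QM delta X0) -> forall b x s,
  E delta X0 0 b x s <-> exists mu nu xi, run x mu nu xi /\ s = mk (fun i => Some (nu i)) (Z.to_nat (b + 1)).
Proof. intros HL b x s. split.
  - intros (w & xiz & (mu & nu & xi & Hb & Hn & Hp) & k & Hk & Hs).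
    destruct (Hp (Z.of_nat k)) as [_ Hx]. lia. rewrite Hk, Nat2Z.id in Hx. injection Hx as Hx.
    exists (fun i => mu (k + i)%nat), (fun i => nu (k + i)%nat), (fun i => xi (k + i)%nat).
    split. rewrite Hx. apply fb_shift; auto.
    rewrite Hs, sigR_mk. replace (Z.of_nat k + b - (Z.of_nat k + 0) + 1) with (b + 1) by lia.
    apply mk_ext. intros i _. destruct (Hp (Z.of_nat k + 0 + Z.of_nat i)) as [-> _]. lia.
    f_equal. f_equal. lia.
  - intros (mu & nu & xi & Hr & Hs).
    destruct (splice HL x mu nu xi Hr) as (mu' & nu' & xi' & t & Hb & Ht & Hn).
    exists (bw nu'), (fun t => if t <? 0 then None else Some (xi' (Z.to_nat t))).
    split. exists mu', nu', xi'. split; auto. unfold bw. split; intros k Hk.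
    destruct (Z.ltb_spec k 0); auto; lia. destruct (Z.ltb_spec k 0); auto; lia.
    exists t. split. destruct (Z.ltb_spec (Z.of_nat t) 0). lia. rewrite Nat2Z.id, Ht. auto.
    rewrite Hs, sigR_mk. replace (Z.of_nat t + b - (Z.of_nat t + 0) + 1) with (b + 1) by lia.
    apply mk_ext. intros i _. unfold bw. destruct (Z.ltb_spec (Z.of_nat t + 0 + Z.of_nat i) 0). lia.
    rewrite <- Hn. f_equal. f_equal. lia.
Qed.

End M.
Set Default Proof Using "All".

Open Scope Z_scope.
Section M.
Context {X U Y : Type} (delta : X -> U -> Y -> X -> Prop) (X0 : X -> Prop) (l : nat)
  (HL : live_reach (QM delta X0)) (Hl : (1 <= l)%nat) (HU : future_unique delta X0 l l).

Lemma EI_run x s : EI delta X0 l l x s <->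
  exists mu nu xi, run delta x mu nu xi /\ s = mk (fun i => Some (nu i)) l.
Proof. unfold EI. rewrite Z.sub_diag. rewrite (E0_run delta X0 HL).
  replace (Z.to_nat (Z.of_nat l - 1 + 1)) with l by lia. reflexivity. Qed.

Lemma EI_intro x mu nu xi : run delta x mu nu xi -> EI delta X0 l l x (mk (fun i => Some (nu i)) l).
Proof. intro H. apply EI_run. eauto. Qed.

Lemma EI_uniq x s s' : EI delta X0 l l x s -> EI delta X0 l l x s' -> s = s'.
Proof. intros H1 H2. pose proof (HU x s s' H1 H2) as H.
  apply EI_run in H1, H2. destruct H1 as (?&?&?&_&->). destruct H2 as (?&?&?&_&->).
  replace (Z.of_nat l - Z.of_nat l) with 0 in H by lia. rewrite !strR0 in H.
  replace (Z.to_nat (Z.of_nat l - 1 + 1)) with l in H by lia. rewrite !firstn_mk in H by lia. exact H. Qed.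

Lemma UQ x mu1 nu1 xi1 mu2 nu2 xi2 : run delta x mu1 nu1 xi1 -> run delta x mu2 nu2 xi2 ->
  forall i, (i < l)%nat -> nu1 i = nu2 i.
Proof. intros H1 H2 i Hi. pose proof (EI_uniq _ _ _ (EI_intro _ _ _ _ H1) (EI_intro _ _ _ _ H2)) as H.
  pose proof (mk_inj _ _ _ H i Hi). injection H0. auto. Qed.

Lemma UQ2 x s mu nu xi : EI delta X0 l l x s -> run delta x mu nu xi -> s = mk (fun i => Some (nu i)) l.
Proof. intros H1 H2. apply (EI_uniq x); auto. apply (EI_intro _ _ _ _ H2). Qed.

Lemma EI_ex x : exists s, EI delta X0 l l x s.
Proof. destruct (run_exists delta X0 HL x) as (mu&nu&xi&H). eexists. apply (EI_intro _ _ _ _ H). Qed.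

Lemma EI_single x s : EI delta X0 l l x s -> EI delta X0 l l x = (fun t => t = s).
Proof. intro H. apply functional_extensionality. intro t. apply propositional_extensionality.
  split. intro H'. apply (EI_uniq x); auto. intros ->. auto. Qed.

Lemma EI_same x z s : EI delta X0 l l x s -> EI delta X0 l l z s -> EI delta X0 l l x = EI delta X0 l l z.
Proof. intros H1 H2. rewrite (EI_single _ _ H1), (EI_single _ _ H2). auto. Qed.

Lemma EI_cons x u y x' s' : delta x u y x' -> EI delta X0 l l x' s' ->
  EI delta X0 l l x (Some y :: firstn (l - 1) s').
Proof. intros Hd H. apply EI_run in H. destruct H as (mu&nu&xi&Hr&->).
  pose proof (run_cons delta _ _ _ _ _ _ _ Hd Hr) as Hc. pose proof (EI_intro _ _ _ _ Hc) as He.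
  destruct l as [|m]. lia. rewrite mk_S in He. simpl in He. rewrite firstn_mk by lia.
  replace (S m - 1)%nat with m by lia. exact He. Qed.

Lemma htrans_intro x x' s s' u y : EI delta X0 l l x s -> EI delta X0 l l x' s' -> delta x u y x' ->
  htrans delta X0 l l s u y s'.
Proof. intros H1 H2 Hd. unfold htrans. cbv zeta.
  replace (Z.of_nat l - Z.of_nat l - 1) with (-1) by lia. replace (Z.of_nat l - Z.of_nat l) with 0 by lia.
  split. reflexivity. split; [|eauto].
  pose proof (EI_cons _ _ _ _ _ Hd H2) as Hc. rewrite (EI_uniq _ _ _ H1 Hc).
  rewrite !strR0. replace (Z.to_nat (Z.of_nat l - 1 + 1)) with l by lia.
  replace (Z.to_nat (Z.of_nat l - 2 + 1)) with (l - 1)%nat by lia.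
  apply EI_run in H2. destruct H2 as (?&?&?&_&->).
  destruct l as [|m]. lia. simpl. rewrite Nat.sub_0_r. rewrite !firstn_mk by lia. reflexivity. Qed.

End M.

Open Scope Z_scope.
Section M.
Context {X U Y : Type} (delta : X -> U -> Y -> X -> Prop) (X0 : X -> Prop) (l : nat)
  (HL : live_reach (QM delta X0)) (Hl : (1 <= l)%nat) (HU : future_unique delta X0 l l).

Lemma part2 : sim (hatQ delta X0 l l) (quotQ delta X0 l) (Rrel delta X0 l) /\
   sim (quotQ delta X0 l) (hatQ delta X0 l l) (fun V s => Rrel delta X0 l s V).
Proof. split; split.
  - intros s (x & Hx & Hs). exists (EI delta X0 l l x). split. exists x; auto.
    split. exists x; auto. split. exists x; auto. apply (EI_single _ _ _ HL Hl HU); auto.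
  - intros s V (_ & _ & HV) u y s' (_ & _ & x1 & x1' & H1 & H2 & Hd).
    exists u, y, (EI delta X0 l l x1'). split; [|split; auto].
    simpl. exists x1, x1'. split; auto. rewrite HV. symmetry. apply (EI_single _ _ _ HL Hl HU); auto.
    split. exists x1'; auto. split. exists x1'; auto. apply (EI_single _ _ _ HL Hl HU); auto.
  - intros V (x & Hx & ->). destruct (EI_ex _ _ _ HL Hl HU x) as [s Hs]. exists s.
    split. exists x; auto. split. exists x; auto. split. exists x; auto. apply (EI_single _ _ _ HL Hl HU); auto.
  - intros V s (_ & _ & HV) u y V' (x1 & x1' & E1 & E2 & Hd).
    assert (Hs : EI delta X0 l l x1 s) by (rewrite <- E1, HV; auto).
    destruct (EI_ex _ _ _ HL Hl HU x1') as [s' Hs']. exists u, y, s'. split; [|split; auto].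
    apply (htrans_intro _ _ _ HL Hl HU x1 x1'); auto.
    split. exists x1'; auto. split. exists x1'; auto. rewrite E2. apply (EI_single _ _ _ HL Hl HU); auto.
Qed.

Lemma part3 : sim (hatQ delta X0 l l) (QM delta X0) (fun s x => Rl delta X0 l x s) <->
   sim (quotQ delta X0 l) (QM delta X0) (fun V x => Rq delta X0 l x V).
Proof. split; intros [_ S].
  - split.
    + intros V (x & Hx & ->). exists x. split; auto. split; auto. exists x; auto.
    + intros V x (_ & ->) u y V' (x1 & x1' & E1 & E2 & Hd).
      destruct (EI_ex _ _ _ HL Hl HU x) as [s Hs]. destruct (EI_ex _ _ _ HL Hl HU x1') as [s' Hs'].
      assert (H1 : EI delta X0 l l x1 s) by (rewrite <- E1; auto).
      destruct (S s x (conj (ex_intro _ x Hs) Hs) u y s') as (u2 & y2 & x2 & Hd2 & (_ & H2) & Hy).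
      { apply (htrans_intro _ _ _ HL Hl HU x1 x1'); auto. }
      exists u2, y2, x2. split; auto. split; auto. split. exists x1'; auto.
      rewrite E2. apply (EI_same _ _ _ HL Hl HU _ _ s'); auto.
  - split.
    + intros s (x & Hx & Hs). exists x. split; auto. split; auto. exists x; auto.
    + intros s x (_ & Hs) u y s' (_ & _ & x1 & x1' & H1 & H2 & Hd).
      destruct (S (EI delta X0 l l x) x (conj (ex_intro _ x eq_refl) eq_refl) u y (EI delta X0 l l x1'))
        as (u2 & y2 & x2 & Hd2 & (_ & E) & Hy).
      { exists x1, x1'. split; auto. apply (EI_same _ _ _ HL Hl HU _ _ s); auto. }
      exists u2, y2, x2. split; auto. split; auto. split. exists x1'; auto.
      rewrite <- E. auto.
Qed.
End M.

Open Scope Z_scope.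
Section M.
Context {X U Y : Type} (delta : X -> U -> Y -> X -> Prop) (X0 : X -> Prop) (l : nat)
  (HL : live_reach (QM delta X0)) (Hl : (1 <= l)%nat) (HU : future_unique delta X0 l l).

Lemma same_EI_runs z x mu nu xi mu' nu' xi' : EI delta X0 l l z = EI delta X0 l l x ->
  run delta z mu nu xi -> run delta x mu' nu' xi' -> forall i, (i < l)%nat -> nu i = nu' i.
Proof. intros E H1 H2 i Hi. pose proof (EI_intro _ _ _ HL Hl HU _ _ _ _ H2) as H. rewrite <- E in H.
  pose proof (UQ2 _ _ _ HL Hl HU _ _ _ _ _ H H1) as H3. symmetry.
  pose proof (mk_inj _ _ _ H3 i Hi). congruence. Qed.

Lemma quot_inv mu nu Vs : full_beh (quotQ delta X0 l) mu nu Vs ->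
  forall i j z mu' nu' xi', (i < l)%nat -> Vs j = EI delta X0 l l z -> run delta z mu' nu' xi' ->
  nu' i = nu (j + i)%nat.
Proof. intros [_ Ht] i. induction i as [|i IH]; intros j z mu' nu' xi' Hi Ej Hr.
  - destruct (Ht j) as (x1 & x1' & E1 & E2 & Hd).
    destruct (run_exists _ _ HL x1') as (m2&n2&x2&Hr2).
    pose proof (run_cons _ _ _ _ _ _ _ _ Hd Hr2) as Hc.
    rewrite (same_EI_runs _ _ _ _ _ _ _ _ (eq_trans (eq_sym Ej) E1) Hr Hc 0 Hi). simpl. f_equal. lia.
  - destruct (Ht j) as (x1 & x1' & E1 & E2 & Hd).
    destruct (run_exists _ _ HL x1') as (m2&n2&x2&Hr2).
    pose proof (run_cons _ _ _ _ _ _ _ _ Hd Hr2) as Hc.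
    rewrite (same_EI_runs _ _ _ _ _ _ _ _ (eq_trans (eq_sym Ej) E1) Hr Hc (S i) Hi). simpl.
    rewrite (IH (S j) x1' m2 n2 x2); auto. f_equal. lia.
Qed.

Lemma part1a w : beh (quotQ delta X0 l) w -> SAlCA delta X0 l w.
Proof. intros (mu & nu & Vs & Hb & Hn & Hp).
  pose proof (quot_inv _ _ _ Hb) as Inv.
  destruct Hb as [(x0 & Hx0 & E0) Ht] .
  destruct (proj1 HL x0 Hx0) as (mu' & nu' & xi' & Hb' & Hxi0).
  pose proof (fb_shift _ _ _ _ _ 0 Hb') as Hr0. rewrite Hxi0 in Hr0. simpl in Hr0.
  assert (Hw : forall k : nat, w (Z.of_nat k) = Some (nu k)).
  { intro k. rewrite Hp by lia. rewrite Nat2Z.id. auto. }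
  split; [auto|]. split. intros k Hk. eexists. apply Hp; auto.
  split.
  - exists (bw nu'). split. apply (beh_bw _ _ _ _ _ Hb'). apply sigR_eq. lia.
    intros i Hi. unfold bw. destruct (Z.ltb_spec (- Z.of_nat l + Z.of_nat i) 0).
    apply Hn; auto. assert (i = l) by lia. subst i.
    replace (- Z.of_nat l + Z.of_nat l) with (Z.of_nat 0) by lia. rewrite Hw. simpl.
    f_equal. symmetry. apply (Inv 0%nat 0%nat x0 _ _ _ ltac:(lia) E0 Hr0).
  - intro k. destruct (Nat.ltb_spec k l).
    + exists (bw nu'). split. apply (beh_bw _ _ _ _ _ Hb'). exists k. apply sigR_eq. lia.
      intros i Hi. unfold bw. replace (Z.of_nat k - (Z.of_nat l + 1) + 1) with (Z.of_nat k - Z.of_nat l) by lia.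
      destruct (Z.ltb_spec (Z.of_nat k - Z.of_nat l + Z.of_nat i) 0). apply Hn; auto.
      set (t := Z.to_nat (Z.of_nat k - Z.of_nat l + Z.of_nat i)).
      replace (Z.of_nat k - Z.of_nat l + Z.of_nat i) with (Z.of_nat t) by lia. rewrite Hw; try rewrite Nat2Z.id.
      f_equal. symmetry. apply (Inv t 0%nat x0 _ _ _ ltac:(lia) E0 Hr0).
    + set (j := (k - l)%nat). destruct (Ht j) as (x1 & x1' & E1 & E2 & Hd).
      destruct (run_exists _ _ HL x1') as (m2&n2&x2&Hr2).
      pose proof (run_cons _ _ _ _ _ _ _ _ Hd Hr2) as Hc.
      destruct (splice _ _ HL _ _ _ _ Hc) as (m3 & n3 & x3 & t & Hb3 & Ht3 & Hn3).
      exists (bw n3). split. apply (beh_bw _ _ _ _ _ Hb3). exists (t + l)%nat.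
      apply sigR_eq. lia. intros i Hi.
      replace (Z.of_nat (t + l) - (Z.of_nat l + 1) + 1 + Z.of_nat i) with (Z.of_nat (t + i)) by lia.
      replace (Z.of_nat k - Z.of_nat l + Z.of_nat i) with (Z.of_nat (j + i)) by lia.
      rewrite Hw. unfold bw. destruct (Z.ltb_spec (Z.of_nat (t + i)) 0). lia.
      rewrite Nat2Z.id, Hn3. f_equal. destruct i as [|i]. simpl. f_equal. lia.
      simpl. rewrite (Inv i (S j) x1' _ _ _ ltac:(lia) E2 Hr2). f_equal. lia.
Qed.
End M.

Open Scope Z_scope.
Section M.
Context {X U Y : Type} (delta : X -> U -> Y -> X -> Prop) (X0 : X -> Prop) (l : nat)
  (HL : live_reach (QM delta X0)) (Hl : (1 <= l)%nat) (HU : future_unique delta X0 l l).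

Lemma beh_inv w' : beh (QM delta X0) w' -> exists mu nu xi, full_beh (QM delta X0) mu nu xi /\
  (forall k, k < 0 -> w' k = None) /\ (forall k : nat, w' (Z.of_nat k) = Some (nu k)).
Proof. intros (mu & nu & xi & Hb & Hn & Hp). exists mu, nu, xi. split; auto. split; auto.
  intro k. rewrite Hp by lia. rewrite Nat2Z.id. auto. Qed.

Lemma EI_of_traj mu nu xi t (w : Z -> option Y) a : full_beh (QM delta X0) mu nu xi ->
  (forall i, (i < l)%nat -> w (a + Z.of_nat i) = Some (nu (t + i)%nat)) ->
  EI delta X0 l l (xi t) = (fun s => s = sigR w a (a + Z.of_nat l - 1)).
Proof. intros Hb H. apply (EI_single _ _ _ HL Hl HU).
  pose proof (EI_intro _ _ _ HL Hl HU _ _ _ _ (fb_shift _ _ _ _ _ t Hb)) as He.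
  replace (sigR w a (a + Z.of_nat l - 1)) with (mk (fun i => Some (nu (t + i)%nat)) l). auto.
  rewrite sigR_mk. replace (Z.to_nat (a + Z.of_nat l - 1 - a + 1)) with l by lia.
  apply mk_ext. intros. symmetry. auto. Qed.

Lemma part1b w : SAlCA delta X0 l w -> beh (quotQ delta X0 l) w.
Proof. intros (Hn & Hs & _ & Hd).
  destruct (Hs 0 ltac:(lia)) as [y0 Hy0].
  set (ys := fun k : nat => match w (Z.of_nat k) with Some v => v | None => y0 end).
  assert (Hys : forall k : nat, w (Z.of_nat k) = Some (ys k)).
  { intro k. unfold ys. destruct (Hs (Z.of_nat k) ltac:(lia)) as [v Hv]. rewrite Hv. auto. }
  set (Vs := fun k : nat => fun s => s = sigR w (Z.of_nat k) (Z.of_nat k + Z.of_nat l - 1)).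
  assert (Step : forall k, exists u, qtrans delta X0 l (Vs k) u (ys k) (Vs (S k))).
  { intro k. destruct (Hd (k + l)%nat) as (w' & Hb' & J & HJ).
    destruct (beh_inv _ Hb') as (mu' & nu' & xi' & Hb & Hn' & Hp').
    pose proof (fun E => sigR_pt _ _ _ _ _ _ E HJ) as P. specialize (P ltac:(lia)).
    assert (HJl : (l <= J)%nat).
    { destruct (Nat.leb_spec l J); auto. pose proof (P 0%nat ltac:(lia)) as P0.
      rewrite Hn' in P0 by lia. replace (Z.of_nat (k + l) - Z.of_nat l + Z.of_nat 0) with (Z.of_nat k) in P0 by lia.
      rewrite Hys in P0. discriminate. }
    set (t := (J - l)%nat).
    assert (P' : forall i, (i <= l)%nat -> ys (k + i)%nat = nu' (t + i)%nat).
    { intros i Hi. pose proof (P i ltac:(lia)) as Pi.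
      replace (Z.of_nat (k + l) - Z.of_nat l + Z.of_nat i) with (Z.of_nat (k + i)) in Pi by lia.
      replace (Z.of_nat J - (Z.of_nat l + 1) + 1 + Z.of_nat i) with (Z.of_nat (t + i)) in Pi by lia.
      rewrite Hys, Hp' in Pi. congruence. }
    exists (mu' t). exists (xi' t), (xi' (S t)). split; [|split].
    - unfold Vs. symmetry. apply EI_of_traj with (mu := mu') (nu := nu'); auto.
      intros i Hi. rewrite <- Nat2Z.inj_add, Hys, P'; auto. lia.
    - unfold Vs. symmetry. replace (S t) with (t + 1)%nat by lia. apply EI_of_traj with (mu := mu') (nu := nu'); auto.
      intros i Hi. replace (Z.of_nat (S k) + Z.of_nat i) with (Z.of_nat (k + (1 + i))) by lia.
      rewrite Hys, P' by lia. f_equal. f_equal. lia.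
    - destruct Hb as [_ Hb]. replace (ys k) with (nu' t). apply Hb.
      rewrite <- (Nat.add_0_r k), <- (Nat.add_0_r t). symmetry. apply P'. lia. }
  assert (Init : qinit delta X0 l (Vs 0%nat)).
  { destruct (Hd (l - 1)%nat) as (w' & Hb' & J & HJ).
    destruct (beh_inv _ Hb') as (mu' & nu' & xi' & Hb & Hn' & Hp').
    pose proof (fun E => sigR_pt _ _ _ _ _ _ E HJ) as P. specialize (P ltac:(lia)).
    assert (HJl : (J + 1 = l)%nat).
    { pose proof (P 0%nat ltac:(lia)) as P0. pose proof (P 1%nat ltac:(lia)) as P1.
      rewrite Hn in P0 by lia.
      destruct (Nat.leb_spec l J).
      { replace (Z.of_nat J - (Z.of_nat l + 1) + 1 + Z.of_nat 0) with (Z.of_nat (J - l)) in P0 by lia.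
        rewrite Hp' in P0. discriminate. }
      destruct (Nat.eqb_spec (J + 1) l); auto.
      replace (Z.of_nat (l - 1) - Z.of_nat l + Z.of_nat 1) with (Z.of_nat 0) in P1 by lia.
      rewrite Hys, Hn' in P1 by lia. discriminate. }
    exists (xi' 0%nat). split. apply Hb. unfold Vs. symmetry. apply EI_of_traj with (mu := mu') (nu := nu'); auto.
    intros i Hi. pose proof (P (S i) ltac:(lia)) as Pi.
    replace (Z.of_nat (l - 1) - Z.of_nat l + Z.of_nat (S i)) with (Z.of_nat 0 + Z.of_nat i) in Pi by lia.
    replace (Z.of_nat J - (Z.of_nat l + 1) + 1 + Z.of_nat (S i)) with (Z.of_nat i) in Pi by lia.
    rewrite Pi, Hp'. auto. }
  exists (fun k => proj1_sig (constructive_indefinite_description _ (Step k))), ys, Vs.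
  split. split. exact Init. intro k. exact (proj2_sig (constructive_indefinite_description _ (Step k))).
  split; auto. intros k Hk. rewrite <- (Z2Nat.id k) at 1 by lia. apply Hys.
Qed.
End M.
Unset Default Proof Using.

Open Scope Z_scope.
Section M.
Context {X U Y : Type} (delta : X -> U -> Y -> X -> Prop).

Fixpoint Rn (n : nat) : X -> X -> Prop :=
  match n with
  | O => fun x z => forall v, Hd delta x v <-> Hd delta z v
  | S n' => fun x z => Rn n' x z /\ forall x', (exists a, Td delta x a /\ Rn n' a x') <->
                                             (exists b, Td delta z b /\ Rn n' b x')
  end.

Lemma Rn_refl n x : Rn n x x.
Proof. induction n; simpl; firstorder. Qed.

Lemma Rn_sym n x z : Rn n x z -> Rn n z x.
Proof. revert x z; induction n; simpl; intros x z H.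
  - intro v. symmetry. auto.
  - destruct H as [H1 H2]. split; auto. intro x'. symmetry. auto. Qed.

Lemma Rn_trans n x y z : Rn n x y -> Rn n y z -> Rn n x z.
Proof. revert x y z; induction n; simpl; intros x y z H1 H2.
  - intro v. rewrite H1. auto.
  - destruct H1 as [A1 B1]; destruct H2 as [A2 B2]. split. eauto. intro x'. rewrite B1. auto. Qed.

Lemma PhiS_char n Xi : PhiS delta n Xi <-> exists x0, forall y, Xi y <-> Rn n x0 y.
Proof. revert Xi. induction n as [|n IH]; intro Xi; simpl.
  - split.
    + intros [[x0 H0] [V HV]]. exists x0. intro y. rewrite (HV y). pose proof (proj1 (HV x0) H0) as H.
      split; intros H' v. rewrite H, H'. tauto. rewrite <- H, H'. tauto.
    + intros [x0 H]. split. exists x0. apply H. intro v; tauto.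
      exists (Hd delta x0). intro x. rewrite H. split; intros H' v; rewrite H'; tauto.
  - split.
    + intros [[x0 H0] [Xi0 [HXi0 [c Hc]]]]. exists x0. apply IH in HXi0. destruct HXi0 as [w0 Hw0].
      pose proof (proj1 (Hc x0) H0) as [Hx0a Hx0b]. apply Hw0 in Hx0a.
      intro y. rewrite Hc, Hw0. split.
      * intros [Ha Hb]. split. eapply Rn_trans; [apply Rn_sym|]; eauto.
        intro x'. assert (Hp : PhiS delta n (Rn n x')) by (apply IH; exists x'; tauto).
        specialize (Hx0b _ Hp). specialize (Hb _ Hp). unfold Tinv in *.
        destruct (c (Rn n x')); split.
        -- intros _. destruct Hb as (b & Hb1 & Hb2). exists b. split; auto. apply Rn_sym; auto.
        -- intros _. destruct Hx0b as (b & Hb1 & Hb2). exists b. split; auto. apply Rn_sym; auto.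
        -- intros (a & Ha1 & Ha2). exfalso. apply Hx0b. exists a. split; auto. apply Rn_sym; auto.
        -- intros (a & Ha1 & Ha2). exfalso. apply Hb. exists a. split; auto. apply Rn_sym; auto.
      * intros [Ha Hb]. split. eapply Rn_trans; eauto.
        intros Xi' HXi'. specialize (Hx0b _ HXi'). apply IH in HXi'. destruct HXi' as [w Hw].
        unfold Tinv in *. destruct (c Xi').
        -- destruct Hx0b as (a & Ha1 & Ha2). apply Hw in Ha2.
           destruct (proj1 (Hb w) (ex_intro _ a (conj Ha1 (Rn_sym _ _ _ Ha2)))) as (b & Hb1 & Hb2).
           exists b. split; auto. apply Hw. apply Rn_sym; auto.
        -- intros (b & Hb1 & Hb2). apply Hw in Hb2.
           destruct (proj2 (Hb w) (ex_intro _ b (conj Hb1 (Rn_sym _ _ _ Hb2)))) as (a & Ha1 & Ha2).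
           apply Hx0b. exists a. split; auto. apply Hw. apply Rn_sym; auto.
    + intros [x0 H]. split. exists x0. apply H. exact (Rn_refl (S n) x0).
      exists (Rn n x0). split. apply IH. exists x0. tauto.
      exists (fun Xi' => if excluded_middle_informative (Tinv delta Xi' x0) then true else false).
      intro y. rewrite H. simpl. split.
      * intros [Ha Hb]. split; auto. intros Xi' HXi'. apply IH in HXi'. destruct HXi' as [w Hw].
        unfold Tinv in *. destruct (excluded_middle_informative _) as [T|T].
        -- destruct T as (a & Ha1 & Ha2). apply Hw in Ha2.
           destruct (proj1 (Hb w) (ex_intro _ a (conj Ha1 (Rn_sym _ _ _ Ha2)))) as (b & Hb1 & Hb2).
           exists b. split; auto. apply Hw. apply Rn_sym; auto.
        -- intros (b & Hb1 & Hb2). apply Hw in Hb2.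
           destruct (proj2 (Hb w) (ex_intro _ b (conj Hb1 (Rn_sym _ _ _ Hb2)))) as (a & Ha1 & Ha2).
           apply T. exists a. split; auto. apply Hw. apply Rn_sym; auto.
      * intros [Ha Hb]. split; auto. intro x'.
        assert (Hp : PhiS delta n (Rn n x')) by (apply IH; exists x'; tauto).
        specialize (Hb _ Hp). unfold Tinv in *.
        destruct (excluded_middle_informative _) as [T|T]; split.
        -- intros _. destruct Hb as (b & Hb1 & Hb2). exists b. split; auto. apply Rn_sym; auto.
        -- intros _. destruct T as (b & Hb1 & Hb2). exists b. split; auto. apply Rn_sym; auto.
        -- intros (a & Ha1 & Ha2). exfalso. apply T. exists a. split; auto. apply Rn_sym; auto.
        -- intros (a & Ha1 & Ha2). exfalso. apply Hb. exists a. split; auto. apply Rn_sym; auto.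
Qed.

Lemma Phi_eq_iff m : (forall Xi, PhiS delta (S m) Xi <-> PhiS delta m Xi) <->
  (forall x z, Rn m x z -> Rn (S m) x z).
Proof. split.
  - intros H x z Hxz. assert (Hp : PhiS delta m (Rn m x)) by (apply PhiS_char; exists x; tauto).
    apply H in Hp. apply PhiS_char in Hp. destruct Hp as [x0 Hx0].
    pose proof (proj1 (Hx0 x) (Rn_refl _ _)). pose proof (proj1 (Hx0 z) Hxz).
    eapply Rn_trans; [apply Rn_sym|]; eauto.
  - intros H Xi. rewrite !PhiS_char. split; intros [x0 Hx0]; exists x0; intro y; rewrite Hx0.
    + split; [apply proj1|apply H].
    + split; [apply H|apply proj1]. Qed.
End M.
Set Default Proof Using "All".

Open Scope Z_scope.
Section M.
Context {X U Y : Type} (delta : X -> U -> Y -> X -> Prop) (X0 : X -> Prop) (l : nat)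
  (HL : live_reach (QM delta X0)) (Hl : (1 <= l)%nat) (HU : future_unique delta X0 l l).

Definition P (n : nat) (x z : X) : Prop := forall mu nu xi mu' nu' xi',
  run delta x mu nu xi -> run delta z mu' nu' xi' -> forall i, (i <= n)%nat -> nu i = nu' i.

Lemma P_refl n x : (n < l)%nat -> P n x x.
Proof. intros Hn mu nu xi mu' nu' xi' H1 H2 i Hi. apply (UQ _ _ _ HL Hl HU x _ _ _ _ _ _ H1 H2). lia. Qed.

Lemma P_sym n x z : P n x z -> P n z x.
Proof. intros H mu nu xi mu' nu' xi' H1 H2 i Hi. symmetry. eapply H; eauto. Qed.

Lemma Td_iff x a : Td delta x a <-> exists u y, delta x u y a.
Proof. split. intros (u & y & _ & H). eauto. intros (u & y & H). exists u, y. split; auto. exists u, a; auto. Qed.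

Lemma Hd_run x v : Hd delta x v -> exists mu nu xi, run delta x mu nu xi /\ nu O = v.
Proof. intros (u & x' & Hd). destruct (run_exists _ _ HL x') as (m&n&xx&Hr).
  pose proof (run_cons _ _ _ _ _ _ _ _ Hd Hr). do 3 eexists. split. eauto. simpl. reflexivity. Qed.

Lemma run_Hd x mu nu xi : run delta x mu nu xi -> Hd delta x (nu O).
Proof. intros H. destruct (run_shift _ _ _ _ _ H) as [H1 _]. exists (mu O), (xi 1%nat). auto. Qed.

Lemma run_Td x mu nu xi : run delta x mu nu xi -> Td delta x (xi 1%nat).
Proof. intros H. destruct (run_shift _ _ _ _ _ H) as [H1 _]. apply Td_iff. eauto. Qed.

Lemma succ x a mu nu xi mu' nu' xi' : Td delta x a -> run delta x mu nu xi -> run delta a mu' nu' xi' ->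
  forall i, (S i < l)%nat -> nu' i = nu (S i).
Proof. intros HT H1 H2 i Hi. apply Td_iff in HT. destruct HT as (u & y & Hd).
  pose proof (run_cons _ _ _ _ _ _ _ _ Hd H2) as Hc.
  pose proof (UQ _ _ _ HL Hl HU x _ _ _ _ _ _ H1 Hc (S i) Hi). simpl in H. auto. Qed.

Lemma Rn_P n : (n < l)%nat -> forall x z, Rn delta n x z <-> P n x z.
Proof. induction n as [|n IH]; intros Hn x z; simpl.
  - split.
    + intros H mu nu xi mu' nu' xi' H1 H2 i Hi. assert (i = O) by lia. subst i.
      apply run_Hd in H1 as Hh. apply H in Hh. destruct (Hd_run _ _ Hh) as (m3&n3&x3&H3&E3).
      rewrite <- E3. apply (UQ _ _ _ HL Hl HU z _ _ _ _ _ _ H3 H2). lia.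
    + intros H v. split; intro Hv.
      * destruct (Hd_run _ _ Hv) as (m3&n3&x3&H3&E3). destruct (run_exists _ _ HL z) as (m4&n4&x4&H4).
        rewrite <- E3, (H _ _ _ _ _ _ H3 H4 O ltac:(lia)). eapply run_Hd; eauto.
      * destruct (Hd_run _ _ Hv) as (m3&n3&x3&H3&E3). destruct (run_exists _ _ HL x) as (m4&n4&x4&H4).
        rewrite <- E3, <- (H _ _ _ _ _ _ H4 H3 O ltac:(lia)). eapply run_Hd; eauto.
  - assert (Helper : forall x z x', P (S n) x z -> (exists a, Td delta x a /\ Rn delta n a x') ->
                     exists b, Td delta z b /\ Rn delta n b x').
    { intros x1 z1 x' HP (a & HTa & HRa). apply (IH ltac:(lia)) in HRa.
      destruct (run_exists _ _ HL z1) as (mz&nz&xz&Hz). exists (xz 1%nat). split. eapply run_Td; eauto.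
      apply (IH ltac:(lia)). intros mb nb xb mx nx xx Hb Hx i Hi.
      destruct (run_exists _ _ HL x1) as (m1&n1&xx1&H1). destruct (run_exists _ _ HL a) as (ma&na&xa&Ha).
      rewrite (succ z1 _ _ _ _ _ _ _ (run_Td _ _ _ _ Hz) Hz Hb i ltac:(lia)).
      rewrite <- (HP _ _ _ _ _ _ H1 Hz (S i) ltac:(lia)).
      rewrite <- (succ x1 _ _ _ _ _ _ _ HTa H1 Ha i ltac:(lia)).
      eapply HRa; eauto. }
    split.
    + intros [HR Hall] mu nu xi mu' nu' xi' H1 H2 i Hi. apply (IH ltac:(lia)) in HR.
      destruct i as [|j]. apply (HR _ _ _ _ _ _ H1 H2); lia.
      destruct (proj1 (Hall (xi 1%nat)) (ex_intro _ (xi 1%nat) (conj (run_Td _ _ _ _ H1) (Rn_refl _ _ _))))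
        as (b & HTb & HRb). apply (IH ltac:(lia)) in HRb.
      destruct (run_exists _ _ HL b) as (mb&nb&xb&Hb).
      destruct (run_shift _ _ _ _ _ H1) as [_ Hs].
      rewrite <- (succ z _ _ _ _ _ _ _ HTb H2 Hb j ltac:(lia)).
      symmetry. apply (HRb _ _ _ _ _ _ Hb Hs). lia.
    + intro HP. split. apply (IH ltac:(lia)). intros mu nu xi mu' nu' xi' H1 H2 i Hi. apply (HP _ _ _ _ _ _ H1 H2). lia.
      intro x'. split; apply Helper; auto. apply P_sym; auto.
Qed.

Definition Cond := forall x z, P (l - 1) x z -> forall x',
  (exists a, Td delta x a /\ P (l - 1) a x') -> exists b, Td delta z b /\ P (l - 1) b x'.

Lemma Phi_Cond : (forall Xi, Phi delta (l + 1) Xi <-> Phi delta l Xi) <-> Cond.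
Proof. unfold Phi. assert (Ex : exists m, l = S m) by (exists (l - 1)%nat; lia). destruct Ex as [m El]. unfold Cond. rewrite El.
  replace (Nat.pred (S m + 1)) with (S m) by lia. simpl Nat.pred. rewrite Phi_eq_iff.
  replace (S m - 1)%nat with m by lia.
  assert (RP : forall x z, Rn delta m x z <-> P m x z) by (apply Rn_P; lia).
  split.
  - intros H x z HP x' (a & HTa & HPa). apply RP in HP. destruct (H x z HP) as [_ H2].
    destruct (proj1 (H2 x') (ex_intro _ a (conj HTa (proj2 (RP _ _) HPa)))) as (b & HTb & HRb).
    exists b. split; auto. apply RP; auto.
  - intros H x z HR. split; auto. apply RP in HR. intro x'. split.
    + intros (a & HTa & HRa). destruct (H x z HR x' (ex_intro _ a (conj HTa (proj1 (RP _ _) HRa)))) as (b&HTb&HPb).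
      exists b. split; auto. apply RP; auto.
    + intros (a & HTa & HRa). destruct (H z x (P_sym _ _ _ HR) x' (ex_intro _ a (conj HTa (proj1 (RP _ _) HRa)))) as (b&HTb&HPb).
      exists b. split; auto. apply RP; auto.
Qed.
End M.

Open Scope Z_scope.
Section M.
Context {X U Y : Type} (delta : X -> U -> Y -> X -> Prop) (X0 : X -> Prop) (l : nat)
  (HL : live_reach (QM delta X0)) (Hl : (1 <= l)%nat) (HU : future_unique delta X0 l l).

Lemma E0l x s : E delta X0 (Z.of_nat l - Z.of_nat l) (Z.of_nat l) x s <->
  exists mu nu xi, run delta x mu nu xi /\ s = mk (fun i => Some (nu i)) (S l).
Proof. rewrite Z.sub_diag, (E0_run _ _ HL). replace (Z.to_nat (Z.of_nat l + 1)) with (S l) by lia. reflexivity. Qed.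

Lemma sb_Cond : sb_async_complete delta X0 l l <-> Cond delta l.
Proof. split.
  - intros Hsb x z HP x' (a & HTa & HPa).
    pose proof (proj1 (Td_iff _ _ _ HL Hl HU x a) HTa) as (u & y & Hd).
    destruct (run_exists _ _ HL a) as (ma&na&xa&Ha).
    pose proof (run_cons _ _ _ _ _ _ _ _ Hd Ha) as Hc.
    destruct (splice _ _ HL _ _ _ _ Hc) as (m3 & n3 & x3 & t & Hb3 & Ht3 & Hn3).
    set (s := sigR (bw n3) (Z.of_nat t) (Z.of_nat t + Z.of_nat l)).
    assert (Hs : s = mk (fun i => Some (consf y na i)) (S l)).
    { unfold s. rewrite sigR_mk. replace (Z.to_nat (Z.of_nat t + Z.of_nat l - Z.of_nat t + 1)) with (S l) by lia.
      apply mk_ext. intros i Hi. unfold bw. destruct (Z.ltb_spec (Z.of_nat t + Z.of_nat i) 0). lia.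
      rewrite <- Nat2Z.inj_add, Nat2Z.id, Hn3. reflexivity. }
    destruct (run_exists _ _ HL z) as (mz&nz&xz&Hz).
    assert (HE : EI delta X0 l l z (strR s 0 (Z.of_nat l - 1))).
    { rewrite strR0, Hs. replace (Z.to_nat (Z.of_nat l - 1 + 1)) with l by lia. rewrite firstn_mk by lia.
      replace (mk (fun i => Some (consf y na i)) l) with (mk (fun i => Some (nz i)) l).
      apply (EI_intro _ _ _ HL Hl HU _ _ _ _ Hz). apply mk_ext. intros i Hi. f_equal. symmetry.
      apply (HP _ _ _ _ _ _ Hc Hz). lia. }
    assert (HPi : Pi (Z.of_nat l + 1) (beh (QM delta X0)) s).
    { exists (bw n3). split. apply (beh_bw _ _ _ _ _ Hb3). exists (t + l)%nat. unfold s. rewrite Nat2Z.inj_add. replace (Z.of_nat t + Z.of_nat l - (Z.of_nat l + 1) + 1) with (Z.of_nat t) by lia. reflexivity. }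
    destruct (proj1 (E0l z s) (Hsb z s HPi HE)) as (m4 & n4 & x4 & H4 & E4).
    rewrite Hs in E4. pose proof (mk_inj _ _ _ E4) as E5.
    exists (x4 1%nat). split. eapply run_Td; eauto.
    intros mb nb xb mx nx xx Hb Hx i Hi.
    destruct (run_shift _ _ _ _ _ H4) as [_ H4s].
    rewrite (UQ _ _ _ HL Hl HU _ _ _ _ _ _ _ Hb H4s i ltac:(lia)). simpl.
    assert (E6 := E5 (S i) ltac:(lia)). injection E6 as E6. rewrite <- E6. simpl.
    apply (HPa _ _ _ _ _ _ Ha Hx). lia.
  - intros HC x s (w' & Hb' & J & HJ) HE.
    destruct (beh_inv _ _ _ HL Hl HU _ Hb') as (mu' & nu' & xi' & Hb & Hn' & Hp').
    assert (Hs : s = mk (fun i => w' (Z.of_nat J - Z.of_nat l + Z.of_nat i)) (S l)).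
    { rewrite HJ, sigR_mk. replace (Z.to_nat (Z.of_nat J - (Z.of_nat J - (Z.of_nat l + 1) + 1) + 1)) with (S l) by lia.
      apply mk_ext. intros. f_equal. lia. }
    rewrite Hs, strR0 in HE. replace (Z.to_nat (Z.of_nat l - 1 + 1)) with l in HE by lia.
    rewrite firstn_mk in HE by lia. apply (EI_run _ _ _ HL Hl HU) in HE. destruct HE as (mx & nx & xx & Hx & Ex).
    pose proof (mk_inj _ _ _ Ex) as Ex'.
    assert (HJl : (l <= J)%nat).
    { destruct (Nat.leb_spec l J); auto. pose proof (Ex' O ltac:(lia)) as E0. cbv beta in E0.
      rewrite Hn' in E0 by lia. discriminate. }
    set (t := (J - l)%nat).
    assert (Wt : forall i, w' (Z.of_nat J - Z.of_nat l + Z.of_nat i) = Some (nu' (t + i)%nat)).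
    { intro i. replace (Z.of_nat J - Z.of_nat l + Z.of_nat i) with (Z.of_nat (t + i)) by lia. apply Hp'. }
    assert (Hxz : forall i, (i < l)%nat -> nx i = nu' (t + i)%nat).
    { intros i Hi. pose proof (Ex' i Hi) as E. cbv beta in E. rewrite Wt in E. injection E. auto. }
    pose proof (fb_shift _ _ _ _ _ t Hb) as Hz.
    assert (HP : P delta (l - 1) (xi' t) x).
    { intros m1 n1 x1 m2 n2 x2 H1 H2 i Hi.
      rewrite (UQ _ _ _ HL Hl HU _ _ _ _ _ _ _ H2 Hx i ltac:(lia)), Hxz by lia.
      symmetry. apply (UQ _ _ _ HL Hl HU _ _ _ _ _ _ _ Hz H1 i ltac:(lia)). }
    destruct (run_shift _ _ _ _ _ Hz) as [Hd1 Hz1].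
    destruct (HC (xi' t) x HP (xi' (t + 1)%nat)) as (a & HTa & HPa).
    { exists (xi' (t + 1)%nat). split. apply (proj2 (Td_iff _ _ _ HL Hl HU _ _)). eexists; eexists. exact Hd1.
      apply (P_refl _ _ _ HL Hl HU); lia. }
    pose proof (proj1 (Td_iff _ _ _ HL Hl HU x a) HTa) as (u & y & Hd).
    destruct (run_exists _ _ HL a) as (ma&na&xa&Ha).
    pose proof (run_cons _ _ _ _ _ _ _ _ Hd Ha) as Hc.
    apply E0l. exists (consf u ma), (consf y na), (consf x xa). split; auto.
    rewrite Hs. apply mk_ext. intros i Hi. rewrite Wt. f_equal. destruct i as [|j].
    + rewrite <- (Hxz O) by lia. simpl. symmetry. apply (UQ _ _ _ HL Hl HU _ _ _ _ _ _ _ Hc Hx O ltac:(lia)).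
    + simpl. pose proof (fb_shift _ _ _ _ _ (t + 1) Hb) as Hz2.
      rewrite (HPa _ _ _ _ _ _ Ha Hz2 j ltac:(lia)). f_equal. lia.
Qed.
End M.
Theorem proposition12 (X U Y : Type) (delta : X -> U -> Y -> X -> Prop) (X0 : X -> Prop)
  (l : nat) :
  standing delta X0 -> (1 <= l)%nat -> future_unique delta X0 l l ->
  (* (i) *)
  (forall w, beh (quotQ delta X0 l) w <-> SAlCA delta X0 l w) /\
  (* (ii) *)
  (sim (hatQ delta X0 l l) (quotQ delta X0 l) (Rrel delta X0 l) /\
   sim (quotQ delta X0 l) (hatQ delta X0 l l) (fun V s => Rrel delta X0 l s V)) /\
  (* (iii) *)
  (sim (hatQ delta X0 l l) (QM delta X0) (fun s x => Rl delta X0 l x s) <->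
   sim (quotQ delta X0 l) (QM delta X0) (fun V x => Rq delta X0 l x V)) /\
  (* (iv) *)
  (sb_async_complete delta X0 l l <->
   (forall Xi, Phi delta (l + 1) Xi <-> Phi delta l Xi)).
Proof.
  intros [HL _] Hl HU.
  split. intro w. split. apply (part1a _ _ _ HL Hl HU). apply (part1b _ _ _ HL Hl HU).
  split. apply (part2 _ _ _ HL Hl HU).
  split. apply (part3 _ _ _ HL Hl HU).
  rewrite (sb_Cond _ _ _ HL Hl HU). symmetry. apply (Phi_Cond _ _ _ HL Hl HU).
Qed.
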